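(* Let $\mathsf{X}$ be any intermediate temporal logic. A temporal theory $\Gamma$ is $\mathsf{X}$-consistent if and only if $\Gamma$ is $\mathrm{LTL}$-consistent.
   Context: Fix a countable set $\mathbb{P}$ of atoms. Temporal formulas: $\varphi ::= p\mid\bot\mid\varphi\wedge\varphi\mid\varphi\vee\varphi\mid\varphi\to\varphi\mid\circ\varphi\mid\varphi\,\mathsf{U}\,\varphi\mid\varphi\,\mathsf{R}\,\varphi$; $\Box\varphi:=\bot\,\mathsf{R}\,\varphi$. An intuitionistic temporal frame is $(W,\preccurlyeq,S)$ with $W\ne\emptyset$, $\preccurlyeq$ a partial order, $S:W\to W$ forward confluent ($w\preccurlyeq v\Rightarrow S(w)\preccurlyeq S(v)$); persistent if also backward confluent (if $S(w)=v\preccurlyeq u$ then some $t\succcurlyeq w$ has $S(t)=u$). A model adds $V:W\to2^{\mathbb{P}}$ monotone along $\preccurlyeq$. Satisfaction: atoms via $V$; $\bot$ never; $\wedge,\vee$ pointwise; $M,w\models\varphi\to\psi$ iff for all $v\succcurlyeq w$, $M,v\models\varphi$ implies $M,v\models\psi$; $\circ\varphi$ at $w$ iff $\varphi$ at $S(w)$; $\varphi\,\mathsf{U}\,\psi$: some $k\ge0$ with $\psi$ at $S^k(w)$ and $\varphi$ at $S^i(w)$ for all $0\le i<k$; $\varphi\,\mathsf{R}\,\psi$: for all $k\ge0$, $\psi$ at $S^k(w)$ or $\varphi$ at some $S^i(w)$, $0\le i<k$. Depth $\le n$: no chain of $n+1$ pairwise distinct $\preccurlyeq$-related worlds. $\mathrm{ITL}^{\mathrm{BD}_n}$: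 formulas true at every world of every model on a persistent frame of depth $\le n$; $\mathrm{LTL}:=\mathrm{ITL}^{\mathrm{BD}_1}$, whose models are those with $\preccurlyeq$ the identity. An intermediate temporal logic is a set $\mathsf{X}$ with $\mathrm{ITL}^{\mathrm{BD}_n}\subseteq\mathsf{X}\subseteq\mathrm{LTL}$ for some $n\ge1$, closed under modus ponens, necessitation ($\psi\in\mathsf{X}\Rightarrow\circ\psi,\Box\psi\in\mathsf{X}$) and uniform substitution. $\mathsf{X}$-models are models on persistent frames of depth $\le n$ validating every formula of $\mathsf{X}$. $\Gamma$ is $\mathsf{X}$-consistent if some $\mathsf{X}$-model satisfies all of $\Gamma$ at some world. *)

(* Defs.v *)
From Stdlib Require Import Arith.

Definition atom := nat.

Inductive form : Type :=
| Atom : atom -> form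
| Bot : form
| And : form -> form -> form
| Or : form -> form -> form
| Imp : form -> form -> form
| Next : form -> form
| Until : form -> form -> form
| Release : form -> form -> form.

Definition Box (phi : form) : form := Release Bot phi.

Fixpoint subst (s : atom -> form) (phi : form) : form :=
  match phi with
  | Atom p => s p
  | Bot => Bot
  | And a b => And (subst s a) (subst s b)
  | Or a b => Or (subst s a) (subst s b)
  | Imp a b => Imp (subst s a) (subst s b)
  | Next a => Next (subst s a)
  | Until a b => Until (subst s a) (subst s b)
  | Release a b => Release (subst s a) (subst s b)
  end.

Record model : Type := Model {
  world : Type;
  wle : world -> world -> Prop;
  succ : world -> world;
  val : world -> atom -> Prop
}.

Definition frame_ok (M : model) : Prop :=
  (exists w : world M, True) /\
  (forall w, wle M w w) /\
  (forall u v w, wle M u v -> wle M v w -> wle M u w) /\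
  (forall u v, wle M u v -> wle M v u -> u = v) /\
  (forall w v, wle M w v -> wle M (succ M w) (succ M v)) /\
  (forall w v p, wle M w v -> val M w p -> val M v p).

Definition persistent (M : model) : Prop :=
  forall w u, wle M (succ M w) u -> exists t, wle M w t /\ succ M t = u.

Definition depth_le (M : model) (n : nat) : Prop :=
  ~ exists c : nat -> world M,
      forall i j, i <= n -> j <= n -> i <> j ->
        c i <> c j /\ (wle M (c i) (c j) \/ wle M (c j) (c i)).

Definition iter_succ (M : model) (k : nat) (w : world M) : world M :=
  Nat.iter k (succ M) w.

Fixpoint sat (M : model) (w : world M) (phi : form) : Prop :=
  match phi with
  | Atom p => val M w p
  | Bot => False
  | And a b => sat M w a /\ sat M w b
  | Or a b => sat M w a \/ sat M w b
  | Imp a b => forall v, wle M w v -> sat M v a -> sat M v b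
  | Next a => sat M (succ M w) a
  | Until a b => exists k, sat M (iter_succ M k w) b /\
                   forall i, i < k -> sat M (iter_succ M i w) a
  | Release a b => forall k, sat M (iter_succ M k w) b \/
                   exists i, i < k /\ sat M (iter_succ M i w) a
  end.

Definition BD_model (n : nat) (M : model) : Prop :=
  frame_ok M /\ persistent M /\ depth_le M n.

Definition ITL_BD (n : nat) (phi : form) : Prop :=
  forall M, BD_model n M -> forall w : world M, sat M w phi.

Definition LTL : form -> Prop := ITL_BD 1.

(* X is an intermediate temporal logic, witnessed by the depth bound n *)
Definition intermediate (n : nat) (X : form -> Prop) : Prop :=
  1 <= n /\
  (forall phi, ITL_BD n phi -> X phi) /\
  (forall phi, X phi -> LTL phi) /\
  (forall phi psi, X phi -> X (Imp phi psi) -> X psi) /\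
  (forall psi, X psi -> X (Next psi) /\ X (Box psi)) /\
  (forall s phi, X phi -> X (subst s phi)).

Definition X_model (n : nat) (X : form -> Prop) (M : model) : Prop :=
  BD_model n M /\ forall phi, X phi -> forall w : world M, sat M w phi.

Definition X_consistent (n : nat) (X : form -> Prop) (Gamma : form -> Prop) : Prop :=
  exists M, X_model n X M /\
    exists w : world M, forall phi, Gamma phi -> sat M w phi.

Definition LTL_consistent (Gamma : form -> Prop) : Prop :=
  X_consistent 1 LTL Gamma.

(* Main.v *)
Require Import Defs.
From Stdlib Require Import Arith Lia Classical.

Lemma iter_mono (M : model) : frame_ok M ->
  forall k u v, wle M u v -> wle M (iter_succ M k u) (iter_succ M k v).
Proof.
  intros [_ [_ [_ [_ [Hf _]]]]] k; induction k; intros u v H; simpl; auto.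
Qed.

Lemma sat_mono (M : model) : frame_ok M ->
  forall phi u v, wle M u v -> sat M u phi -> sat M v phi.
Proof.
  intros HF. pose proof HF as [_ [Hr [Ht [Ha [Hf Hv]]]]].
  induction phi; intros u v Huv Hs; simpl in *.
  - eauto.
  - exact Hs.
  - destruct Hs; split; eauto.
  - destruct Hs; [left|right]; eauto.
  - intros x Hx. apply Hs. eauto.
  - eauto.
  - destruct Hs as [k [Hk Hi]]. exists k. split.
    + eapply IHphi2; [apply iter_mono; eauto|]; exact Hk.
    + intros i Hi'. eapply IHphi1; [apply iter_mono; eauto|]; auto.
  - intros k. destruct (Hs k) as [H|[i [Hi H]]].
    + left. eapply IHphi2; [apply iter_mono; eauto|]; exact H.
    + right. exists i. split; auto. eapply IHphi1; [apply iter_mono; eauto|]; exact H.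
Qed.

Definition maximal (M : model) (u : world M) := forall x, wle M u x -> x = u.

Lemma iter_max (M : model) : persistent M ->
  forall k u, maximal M u -> maximal M (iter_succ M k u).
Proof.
  intros Hp k; induction k; intros u Hu; simpl; auto.
  specialize (IHk u Hu). intros x Hx.
  destruct (Hp _ _ Hx) as [t [Ht Hts]].
  rewrite (IHk t Ht) in Hts. auto.
Qed.

Definition Nmod (M : model) : model := Model (world M) eq (succ M) (val M).

Lemma agree (M : model) : frame_ok M -> persistent M ->
  forall phi u, maximal M u -> (sat (Nmod M) u phi <-> sat M u phi).
Proof.
  intros HF Hp. induction phi; intros u Hu; simpl.
  - tauto.
  - tauto.
  - rewrite IHphi1, IHphi2 by auto; tauto.
  - rewrite IHphi1, IHphi2 by auto; tauto.
  - split.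
    + intros H v Hv. rewrite (Hu v Hv) in *. intros Ha.
      apply IHphi2; auto. apply (H u eq_refl). apply IHphi1; auto.
    + intros H v Hv. subst v. intros Ha.
      apply IHphi2; auto. apply H; [|apply IHphi1; auto].
      destruct HF as [_ [Hr _]]; apply Hr.
  - apply IHphi. apply (iter_max M Hp 1 u Hu).
  - change (iter_succ (Nmod M)) with (iter_succ M).
    split; intros [k [H1 H2]]; exists k; split;
      try (apply IHphi2; [apply iter_max; auto|]; exact H1);
      intros i Hi; apply IHphi1; try (apply iter_max; auto); auto.
  - change (iter_succ (Nmod M)) with (iter_succ M).
    split; intros H k; destruct (H k) as [H1|[i [Hi H1]]];
      [left; apply IHphi2; [apply iter_max; auto|]; exact H1
      |right; exists i; split; auto; apply IHphi1; [apply iter_max; auto|]; exact H1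
      |left; apply IHphi2; [apply iter_max; auto|]; exact H1
      |right; exists i; split; auto; apply IHphi1; [apply iter_max; auto|]; exact H1].
Qed.

Definition chain (M : model) (w : world M) (k : nat) (c : nat -> world M) :=
  c 0 = w /\ forall i j, i <= j -> j <= k -> wle M (c i) (c j) /\ (i <> j -> c i <> c j).

Lemma chain_or_max (M : model) : frame_ok M -> forall w k,
  (exists v, wle M w v /\ maximal M v) \/ exists c, chain M w k c.
Proof.
  intros HF. pose proof HF as [_ [Hr [Ht [Ha _]]]]. intros w k; induction k.
  - right. exists (fun _ => w). split; auto. intros i j Hi Hj. split; [apply Hr|lia].
  - destruct IHk as [H|[c [Hc0 Hc]]]; [left; exact H|].
    destruct (classic (maximal M (c k))) as [Hm|Hm].
    + left. exists (c k). split; auto. rewrite <- Hc0. apply Hc; lia.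
    + apply not_all_ex_not in Hm. destruct Hm as [x Hx].
      apply imply_to_and in Hx. destruct Hx as [Hkx Hxk].
      right. exists (fun i => if Nat.leb i k then c i else x). split.
      { simpl. exact Hc0. }
      intros i j Hij Hj.
      destruct (Nat.leb i k) eqn:Ei; destruct (Nat.leb j k) eqn:Ej;
        apply Nat.leb_le in Ei || apply Nat.leb_gt in Ei;
        apply Nat.leb_le in Ej || apply Nat.leb_gt in Ej; try lia.
      * apply Hc; lia.
      * assert (Hik : wle M (c i) (c k)) by (apply Hc; lia).
        split; [eauto|]. intros _ E. apply Hxk.
        apply Ha; auto. rewrite <- E. exact Hik.
      * split; [apply Hr|lia].
Qed.

Lemma exists_max (M : model) (n : nat) : frame_ok M -> depth_le M n ->
  forall w, exists v, wle M w v /\ maximal M v.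
Proof.
  intros HF Hd w. destruct (chain_or_max M HF w n) as [H|[c [_ Hc]]]; auto.
  exfalso. apply Hd. exists c. intros i j Hi Hj Hij.
  destruct (Nat.lt_ge_cases i j).
  - destruct (Hc i j) as [H1 H2]; try lia. split; auto.
  - destruct (Hc j i) as [H1 H2]; try lia. split; auto. intro E; apply (H2 ltac:(lia)); auto.
Qed.

Lemma Nmod_BD1 (M : model) : frame_ok M -> BD_model 1 (Nmod M).
Proof.
  intros [[w _] _]. split; [|split].
  - repeat split; simpl; intros; subst; eauto.
  - intros u x H. exists u. simpl in *. auto.
  - intros [c Hc]. destruct (Hc 0 1) as [H1 H2]; try lia.
    simpl in H2. destruct H2; auto.
Qed.

Lemma depth_mono (M : model) n : 1 <= n -> depth_le M 1 -> depth_le M n.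
Proof.
  intros Hn Hd [c Hc]. apply Hd. exists c. intros i j Hi Hj Hij. apply Hc; lia.
Qed.

Theorem corollary4p7 (n : nat) (X : form -> Prop) (Gamma : form -> Prop) :
  intermediate n X -> (X_consistent n X Gamma <-> LTL_consistent Gamma).
Proof.
  intros [Hn [_ [HXL _]]]. split.
  - intros [M [[[HF [Hp Hd]] _] [w Hw]]].
    destruct (exists_max M n HF Hd w) as [v [Hwv Hv]].
    exists (Nmod M). split.
    + split; [apply Nmod_BD1; auto|]. intros phi Hphi u. apply Hphi. apply Nmod_BD1; auto.
    + exists v. intros phi Hg. apply agree; auto. eapply sat_mono; eauto.
  - intros [M [[[HF [Hp Hd]] HL] [w Hw]]].
    exists M. split; [|exists w; auto].
    split; [split; [auto|split; [auto|apply depth_mono; auto]]|].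
    intros phi Hphi. apply HL. apply HXL. exact Hphi.
Qed.
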